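(* Let $\succ$ be a binary relation on $\mathcal{F}$ admitting a unique hope-and-prepare representation $(u,C,D)$: $u:X\to\mathbb{R}$ non-constant affine (unique up to positive affine transformation), $C,D\subseteq\Delta$ unique convex compact sets with $C\cap D\neq\emptyset$, and for all $f,g\in\mathcal{F}$, $f\succ g$ iff $\min_{p\in C}\int u(f)\,dp>\min_{p\in C}\int u(g)\,dp$ and $\max_{p\in D}\int u(f)\,dp>\max_{p\in D}\int u(g)\,dp$. For a binary relation $\succ^*$ on $\mathcal{F}$, the following are equivalent: (i) $\succ^*$ is an invariant biseparable preference and an extension of $\succ$ (i.e. $f\succ g$ implies $f\succ^* g$ for all $f,g\in\mathcal{F}$); (ii) there exists $\alpha\in[0,1]$ such that for all $f,g\in\mathcal{F}$, $$f\succ^* g\iff \alpha\min_{p\in C}\int u(f)\,dp+(1-\alpha)\max_{p\in D}\int u(f)\,dp>\alpha\min_{p\in C}\int u(g)\,dp+(1-\alpha)\max_{p\in D}\int u(g)\,dp,$$ and this $\alpha$ is unique whenever $\succ$ is not complete.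
   Context: $S$ is a set of states with algebra $\Sigma$; $X$ is a non-singleton convex subset of a real vector space; $\mathcal{F}$ is the set of simple acts $f:S\to X$ ($\Sigma$-measurable, finitely many values), with pointwise mixtures; elements of $X$ are identified with constant acts. $\Delta$ is the set of finitely additive probability measures on $(S,\Sigma)$ with the weak* topology. A binary relation $\succ^*$ on $\mathcal{F}$ is invariant biseparable if it is asymmetric, complete and negatively transitive and satisfies: (continuity) for all $f,g,h$, $\{\alpha\in[0,1]:\alpha f+(1-\alpha)g\succ^* h\}$ and $\{\alpha\in[0,1]:h\succ^*\alpha f+(1-\alpha)g\}$ are open in $[0,1]$; (certainty independence) for all $f,g\in\mathcal{F}$, $x\in X$, $\alpha\in(0,1)$, $f\succ^* g$ iff $\alpha f+(1-\alpha)x\succ^*\alpha g+(1-\alpha)x$; (monotonicity) if $f(s)\succ^* g(s)$ for all $s\in S$ then $f\succ^* g$. *)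

(* Defs.v *)
From HB Require Import structures.
From mathcomp Require Import all_boot all_order all_algebra.
From mathcomp Require Import all_classical all_reals all_analysis.
Set Implicit Arguments. Unset Strict Implicit. Unset Printing Implicit Defensive.
Import Order.TTheory GRing.Theory Num.Theory.
Import numFieldNormedType.Exports.
Local Open Scope classical_set_scope.
Local Open Scope ring_scope.

Definition is_algebra {S : Type} (Sig : set (set S)) : Prop :=
  Sig setT /\ (forall A, Sig A -> Sig (~` A)) /\
  (forall A B, Sig A -> Sig B -> Sig (A `|` B)).

Definition convex_in {R : realType} {V : lmodType R} (X : set V) : Prop :=
  forall x y, X x -> X y -> forall t : R, 0 <= t <= 1 -> X (t *: x + (1 - t) *: y).

Definition is_act {R : realType} {V : lmodType R} {S : Type}
  (Sig : set (set S)) (X : set V) (f : S -> V) : Prop :=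
  (forall s, X (f s)) /\ finite_set (range f) /\ (forall x, Sig (f @^-1` [set x])).

Definition mix {R : realType} {V : lmodType R} {S : Type}
  (a : R) (f g : S -> V) : S -> V := fun s => a *: f s + (1 - a) *: g s.

Definition cst_act {V S : Type} (x : V) : S -> V := fun _ => x.

(* finitely additive probability measures on (S, Sig); values off Sig are
   normalized to 0, so that p is determined by its restriction to Sig *)
Definition fa_prob {R : realType} {S : Type} (Sig : set (set S)) (p : set S -> R) : Prop :=
  (forall A, Sig A -> 0 <= p A) /\ (forall A, ~ Sig A -> p A = 0) /\ p setT = 1 /\
  (forall A B, Sig A -> Sig B -> A `&` B = set0 -> p (A `|` B) = p A + p B).

Definition Delta {R : realType} {S : Type} (Sig : set (set S)) : set (set S -> R) :=
  [set p | fa_prob Sig p].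

(* weak* compactness: on Delta the weak* topology is the topology of
   setwise convergence p |-> p A (A in Sig), i.e. the product topology *)
Definition weak_star_compact {R : realType} {S : Type} (C : set (set S -> R)) : Prop :=
  @compact {ptws set S -> R} C.

Definition convex_meas {R : realType} {S : Type} (C : set (set S -> R)) : Prop :=
  forall p q, C p -> C q -> forall t : R, 0 <= t <= 1 ->
    C (fun A => t * p A + (1 - t) * q A).

Definition integ {R : realType} {V : lmodType R} {S : Type}
  (u : V -> R) (f : S -> V) (p : set S -> R) : R :=
  \sum_(x \in range f) u x * p (f @^-1` [set x]).

Definition minC {R : realType} {V : lmodType R} {S : Type}
  (C : set (set S -> R)) (u : V -> R) (f : S -> V) : R :=
  inf [set integ u f p | p in C].

Definition maxD {R : realType} {V : lmodType R} {S : Type}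
  (D : set (set S -> R)) (u : V -> R) (f : S -> V) : R :=
  sup [set integ u f p | p in D].

Definition affine_on {R : realType} {V : lmodType R} (X : set V) (u : V -> R) : Prop :=
  forall x y, X x -> X y -> forall t : R, 0 <= t <= 1 ->
    u (t *: x + (1 - t) *: y) = t * u x + (1 - t) * u y.

Definition nonconstant_on {R : realType} {V : lmodType R} (X : set V) (u : V -> R) : Prop :=
  exists x y, X x /\ X y /\ u x <> u y.

Definition HP_rep {R : realType} {V : lmodType R} {S : Type}
  (Sig : set (set S)) (X : set V) (pref : (S -> V) -> (S -> V) -> Prop)
  (u : V -> R) (C D : set (set S -> R)) : Prop :=
  affine_on X u /\ nonconstant_on X u /\
  C `<=` Delta Sig /\ D `<=` Delta Sig /\
  convex_meas C /\ convex_meas D /\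
  weak_star_compact C /\ weak_star_compact D /\
  (C `&` D) !=set0 /\
  (forall f g, is_act Sig X f -> is_act Sig X g ->
     (pref f g <-> minC C u f > minC C u g /\ maxD D u f > maxD D u g)).

Definition unique_HP_rep {R : realType} {V : lmodType R} {S : Type}
  (Sig : set (set S)) (X : set V) (pref : (S -> V) -> (S -> V) -> Prop)
  (u : V -> R) (C D : set (set S -> R)) : Prop :=
  HP_rep Sig X pref u C D /\
  (forall u' C' D', HP_rep Sig X pref u' C' D' ->
     (exists a b : R, 0 < a /\ forall x, X x -> u' x = a * u x + b) /\
     C' = C /\ D' = D).

Definition asymmetric_on {A : Type} (F : set A) (P : A -> A -> Prop) : Prop :=
  forall f g, F f -> F g -> P f g -> ~ P g f.

(* completeness of a strict relation: incomparability is transitive *)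
Definition complete_on {A : Type} (F : set A) (P : A -> A -> Prop) : Prop :=
  forall f g h, F f -> F g -> F h ->
    (~ P f g /\ ~ P g f) -> (~ P g h /\ ~ P h g) -> (~ P f h /\ ~ P h f).

Definition neg_transitive_on {A : Type} (F : set A) (P : A -> A -> Prop) : Prop :=
  forall f g h, F f -> F g -> F h -> ~ P f g -> ~ P g h -> ~ P f h.

Definition open_in_unit {R : realType} (A : R -> Prop) : Prop :=
  forall a, 0 <= a <= 1 -> A a ->
    exists e : R, 0 < e /\ forall b, 0 <= b <= 1 -> `|b - a| < e -> A b.

Definition invariant_biseparable {R : realType} {V : lmodType R} {S : Type}
  (Sig : set (set S)) (X : set V) (P : (S -> V) -> (S -> V) -> Prop) : Prop :=
  let F := is_act Sig X in
  asymmetric_on F P /\ complete_on F P /\ neg_transitive_on F P /\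
  (forall f g h, F f -> F g -> F h ->
     open_in_unit (fun a => P (mix a f g) h) /\
     open_in_unit (fun a => P h (mix a f g))) /\
  (forall f g x (a : R), F f -> F g -> X x -> 0 < a < 1 ->
     (P f g <-> P (mix a f (cst_act x)) (mix a g (cst_act x)))) /\
  (forall f g, F f -> F g ->
     (forall s, P (cst_act (f s)) (cst_act (g s))) -> P f g).

Definition extends_on {A : Type} (F : set A) (P Q : A -> A -> Prop) : Prop :=
  forall f g, F f -> F g -> P f g -> Q f g.

Definition alpha_val {R : realType} {V : lmodType R} {S : Type}
  (u : V -> R) (C D : set (set S -> R)) (a : R) (f : S -> V) : R :=
  a * minC C u f + (1 - a) * maxD D u f.

Definition alpha_rep {R : realType} {V : lmodType R} {S : Type}
  (Sig : set (set S)) (X : set V) (P : (S -> V) -> (S -> V) -> Prop)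
  (u : V -> R) (C D : set (set S -> R)) (a : R) : Prop :=
  forall f g, is_act Sig X f -> is_act Sig X g ->
    (P f g <-> alpha_val u C D a f > alpha_val u C D a g).

(* Main.v *)
Require Import Defs.
From HB Require Import structures.
From mathcomp Require Import all_boot all_order all_algebra.
From mathcomp Require Import all_classical all_reals all_analysis.
From mathcomp Require Import finmap.
From mathcomp Require Import ring lra.
Import Order.TTheory GRing.Theory Num.Theory.
Local Open Scope classical_set_scope.
Local Open Scope ring_scope.

Section Integ.
Context {R : realType} {V : lmodType R} {S : Type} {Sig : set (set S)}.
Hypothesis alg : is_algebra Sig.

Lemma sig0 : Sig set0.
Proof. by case: alg => hT [hC _]; rewrite -setCT; apply: hC. Qed.

Lemma sigI A B : Sig A -> Sig B -> Sig (A `&` B).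
Proof.
case: alg => hT [hC hU] hA hB.
rewrite -[A `&` B]setCK setCI; apply: (hC); apply: (hU); by apply: (hC).
Qed.

Context {p : set S -> R}.
Hypothesis hp : fa_prob Sig p.

Lemma p0 : p set0 = 0.
Proof.
case: hp => _ [_ [_ hadd]].
have := hadd set0 set0 sig0 sig0 (setI0 _); rewrite setU0 => H.
have H2 : p set0 + p set0 - p set0 = p set0 - p set0 by rewrite -H.
by move: H2; rewrite addrK subrr.
Qed.

Lemma FA_seq {T : choiceType} (h : S -> T) :
  (forall y, Sig (h @^-1` [set y])) -> forall s : seq T, uniq s ->
  Sig (h @^-1` [set` s]) /\ p (h @^-1` [set` s]) = \sum_(y <- s) p (h @^-1` [set y]).
Proof.
move=> hm; elim=> [|y s IH] /=.
  move=> _; have -> : h @^-1` [set` [::]] = set0.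
    by apply/seteqP; split=> x //=; rewrite in_nil.
  by rewrite big_nil p0; split=> //; apply: sig0.
move=> /andP[yns us]; case: (IH us) => Hs Hp.
have E : h @^-1` [set` (y :: s)] = h @^-1` [set y] `|` h @^-1` [set` s].
  apply/seteqP; split=> x /=; rewrite in_cons.
    by case/orP => [/eqP ->|xs]; [left|right].
  by case=> [->|->]; rewrite ?eqxx ?orbT.
have D : h @^-1` [set y] `&` h @^-1` [set` s] = set0.
  apply/seteqP; split=> x //= [hx hs]; move: hs; rewrite hx.
  by move/negP: yns.
case: alg => _ [_ hU]; rewrite E big_cons; split; first exact: hU.
by case: hp => _ [_ [_ hadd]]; rewrite hadd // Hp.
Qed.

Lemma GP {T : choiceType} (h : S -> T) (k : T -> V) (u : V -> R) :
  finite_set (range h) -> (forall y, Sig (h @^-1` [set y])) ->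
  integ u (fun s => k (h s)) p =
  \sum_(y <- fset_set (range h)) u (k y) * p (h @^-1` [set y]).
Proof.
move=> hf hm.
have Er : range (fun s => k (h s)) = k @` range h by rewrite image_comp.
rewrite /integ Er fsbig_finite; last exact: finite_image.
rewrite fset_set_image // (finmap.partition_big_imfset _ k).
apply: eq_big_seq => x _.
rewrite (eq_bigr (fun y => u x * p (h @^-1` [set y]))); last by move=> y /eqP ->.
rewrite -mulr_sumr -big_filter.
have us : uniq (seq.filter (fun y => k y == x) (fset_set (range h))).
  by apply: filter_uniq; apply: finmap.fset_uniq.
case: (FA_seq _ hm _ us) => _ <-.
congr (_ * p _); apply/seteqP; split=> z /=.
  by move=> <-; rewrite mem_filter eqxx /= in_fset_set //; apply/mem_set; exists z.
by rewrite mem_filter => /andP[/eqP].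
Qed.

Lemma Wge0 {T : choiceType} (h : S -> T) y :
  (forall y, Sig (h @^-1` [set y])) -> 0 <= p (h @^-1` [set y]).
Proof. by move=> hm; case: hp => H _; apply: H. Qed.

Lemma Wsum {T : choiceType} (h : S -> T) :
  finite_set (range h) -> (forall y, Sig (h @^-1` [set y])) ->
  \sum_(y <- fset_set (range h)) p (h @^-1` [set y]) = 1.
Proof.
move=> hf hm; case: (FA_seq _ hm _ (finmap.fset_uniq (fset_set (range h)))) => _ <-.
case: hp => _ [_ [H1 _]]; rewrite -H1; congr p.
apply/seteqP; split=> z //= _; rewrite in_fset_set //; apply/mem_set; by exists z.
Qed.

Lemma sumW_le {T : choiceType} (h : S -> T) (F G : T -> R) :
  finite_set (range h) -> (forall y, Sig (h @^-1` [set y])) ->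
  (forall y, range h y -> F y <= G y) ->
  \sum_(y <- fset_set (range h)) F y * p (h @^-1` [set y]) <=
  \sum_(y <- fset_set (range h)) G y * p (h @^-1` [set y]).
Proof.
move=> hf hm hFG; rewrite big_seq [X in _ <= X]big_seq; apply: ler_sum => y.
rewrite in_fset_set // => /set_mem yr; apply: ler_wpM2r; first exact: Wge0.
exact: hFG.
Qed.

Lemma sumW_cst {T : choiceType} (h : S -> T) (c : R) :
  finite_set (range h) -> (forall y, Sig (h @^-1` [set y])) ->
  \sum_(y <- fset_set (range h)) c * p (h @^-1` [set y]) = c.
Proof. by move=> hf hm; rewrite -mulr_sumr Wsum // mulr1. Qed.

Lemma sumW_eq {T : choiceType} (h : S -> T) (F G : T -> R) :
  finite_set (range h) ->
  (forall y, range h y -> F y = G y) ->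
  \sum_(y <- fset_set (range h)) F y * p (h @^-1` [set y]) =
  \sum_(y <- fset_set (range h)) G y * p (h @^-1` [set y]).
Proof.
move=> hf hFG; apply: eq_big_seq => y; rewrite in_fset_set // => /set_mem yr.
by rewrite hFG.
Qed.

Lemma integ_id (h : S -> V) (u : V -> R) :
  finite_set (range h) -> (forall y, Sig (h @^-1` [set y])) ->
  integ u h p = \sum_(y <- fset_set (range h)) u y * p (h @^-1` [set y]).
Proof. by move=> hf hm; rewrite -(GP h id). Qed.

Definition pairf {T1 T2 : Type} (f : S -> T1) (g : S -> T2) := fun s => (f s, g s).

Lemma pair_fin {T1 T2 : choiceType} (f : S -> T1) (g : S -> T2) :
  finite_set (range f) -> finite_set (range g) -> finite_set (range (pairf f g)).
Proof.
move=> hf hg; apply: (sub_finite_set _ (finite_setX hf hg)).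
by move=> [a b] [s _ [<- <-]]; split; exists s.
Qed.

Lemma pair_meas {T1 T2 : choiceType} (f : S -> T1) (g : S -> T2) :
  (forall y, Sig (f @^-1` [set y])) -> (forall y, Sig (g @^-1` [set y])) ->
  forall y, Sig (pairf f g @^-1` [set y]).
Proof.
move=> hf hg [a b].
have -> : pairf f g @^-1` [set (a, b)] = f @^-1` [set a] `&` g @^-1` [set b].
  apply/seteqP; split=> s /=; rewrite /pairf.
    by case=> -> ->.
  by case=> -> ->.
exact: sigI.
Qed.

End Integ.

Section Acts.
Context {R : realType} {V : lmodType R} {S : Type} {Sig : set (set S)} (X : set V).
Hypothesis alg : is_algebra Sig.
Context {p : set S -> R}.
Hypothesis hp : fa_prob Sig p.

Lemma S_ne : exists s : S, True.
Proof.
apply: contrapT => hn.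
have E : [set: S] = set0 by apply/seteqP; split=> s // _; apply: hn; exists s.
by case: hp => _ [_ [H1 _]]; move: H1; rewrite E (p0 alg hp) => /eqP; rewrite eq_sym oner_eq0.
Qed.

Lemma cst_fin (x : V) : finite_set (range (@cst_act V S x)).
Proof. apply: (sub_finite_set _ (finite_set1 x)); by move=> y [s _ <-]. Qed.

Lemma cst_meas (x : V) : forall y, Sig (@cst_act V S x @^-1` [set y]).
Proof.
move=> y; case: (pselect (x = y)) => [<-|nxy].
  have -> : @cst_act V S x @^-1` [set x] = setT by apply/seteqP; split.
  by case: alg.
have -> : @cst_act V S x @^-1` [set y] = set0.
  by apply/seteqP; split=> s //=; rewrite /cst_act.
exact: sig0.
Qed.

Lemma J1 (u : V -> R) x : integ u (cst_act x) p = u x.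
Proof.
rewrite (integ_id alg hp _ _ (cst_fin x) (cst_meas x)).
rewrite (sumW_eq _ _ (fun _ => u x) (cst_fin x)); last by move=> y [s _ <-].
exact: (sumW_cst alg hp _ _ (cst_fin x) (cst_meas x)).
Qed.

Lemma integN (u : V -> R) f : is_act Sig X f ->
  integ (fun x => - u x) f p = - integ u f p.
Proof.
case=> _ [hf hm]; rewrite !(integ_id alg hp) // -sumrN.
by apply: eq_bigr => y _; rewrite mulNr.
Qed.

Lemma J2 (u : V -> R) f g (a : R) : affine_on X u ->
  is_act Sig X f -> is_act Sig X g -> 0 <= a <= 1 ->
  integ u (mix a f g) p = a * integ u f p + (1 - a) * integ u g p.
Proof.
move=> haff [fX [ff fm]] [gX [gf gm]] ha.
have pf := pair_fin f g ff gf; have pm := pair_meas alg f g fm gm.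
have -> : integ u (mix a f g) p = integ u (fun s => (fun y : V * V => a *: y.1 + (1 - a) *: y.2) (pairf f g s)) p by [].
rewrite (GP alg hp (pairf f g) (fun y : V * V => a *: y.1 + (1 - a) *: y.2) u pf pm).
have -> : integ u f p = integ u (fun s => (fun y : V * V => y.1) (pairf f g s)) p by [].
have -> : integ u g p = integ u (fun s => (fun y : V * V => y.2) (pairf f g s)) p by [].
rewrite (GP alg hp (pairf f g) (fun y : V * V => y.1) u pf pm).
rewrite (GP alg hp (pairf f g) (fun y : V * V => y.2) u pf pm).
rewrite !mulr_sumr -big_split /=.
apply: eq_big_seq => y; rewrite in_fset_set // => /set_mem [s _ <-] /=.
rewrite haff //; ring.
Qed.

Lemma Jdiff (u : V -> R) f g :
  is_act Sig X f -> is_act Sig X g -> forall d : R,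
  (forall s, u (g s) + d <= u (f s)) -> integ u g p + d <= integ u f p.
Proof.
move=> [fX [ff fm]] [gX [gf gm]] d hd.
have pf := pair_fin f g ff gf; have pm := pair_meas alg f g fm gm.
have -> : integ u f p = integ u (fun s => (fun y : V * V => y.1) (pairf f g s)) p by [].
have -> : integ u g p = integ u (fun s => (fun y : V * V => y.2) (pairf f g s)) p by [].
rewrite (GP alg hp (pairf f g) (fun y : V * V => y.1) u pf pm).
rewrite (GP alg hp (pairf f g) (fun y : V * V => y.2) u pf pm).
rewrite -[X in _ + X <= _](sumW_cst alg hp _ d pf pm) -big_split /=.
under eq_bigr => y _ do rewrite -mulrDl.
apply: (sumW_le hp) => // y [s _ <-] /=; exact: hd.
Qed.

Lemma seq_argmax {T : eqType} (F : T -> R) (x0 : T) (s : seq T) :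
  exists y, y \in x0 :: s /\ forall z, z \in x0 :: s -> F z <= F y.
Proof.
elim: s x0 => [|x s IH] x0.
  by exists x0; split; rewrite ?mem_head // => z; rewrite inE => /eqP ->.
case: (IH x) => y [ys hy].
case: (leP (F x0) (F y)) => h.
  exists y; split; first by rewrite inE ys orbT.
  by move=> z; rewrite inE => /orP[/eqP ->|/hy].
exists x0; split; first exact: mem_head.
move=> z; rewrite inE => /orP[/eqP ->//|/hy hz]; exact: (le_trans hz (ltW h)).
Qed.

Lemma act_max (u : V -> R) f : is_act Sig X f ->
  exists x, X x /\ forall s, u (f s) <= u x.
Proof.
move=> [fX [ff fm]]; case: S_ne => s0 _.
case: (seq_argmax u (f s0) (fset_set (range f))) => y [yin hy].
have yr : range f y.
  move: yin; rewrite inE => /orP[/eqP ->|]; first by exists s0.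
  by rewrite in_fset_set // => /set_mem.
case: yr => s1 _ E; exists (f s1); rewrite E; split => //; first by rewrite -E.
move=> s.
by apply: hy; rewrite inE in_fset_set //; apply/orP; right; apply/mem_set; exists s.
Qed.

Lemma integ_le (u : V -> R) f c : is_act Sig X f ->
  (forall s, u (f s) <= c) -> integ u f p <= c.
Proof.
move=> [fX [ff fm]] hc; rewrite (integ_id alg hp) //.
rewrite -[X in _ <= X](sumW_cst alg hp _ c ff fm); apply: (sumW_le hp) => // y [s _ <-]; exact: hc.
Qed.

End Acts.

Section ActsGen.
Context {R : realType} {V : lmodType R} {S : Type} {Sig : set (set S)} {X : set V}.
Hypothesis alg : is_algebra Sig.

Lemma Sig_seq {T : choiceType} (h : S -> T) :
  (forall y, Sig (h @^-1` [set y])) -> forall s : seq T, Sig (h @^-1` [set` s]).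
Proof.
move=> hm; elim=> [|y s IH] /=.
  have -> : h @^-1` [set` [::]] = set0.
    by apply/seteqP; split=> x //=; rewrite in_nil.
  exact: (sig0 alg).
have E : h @^-1` [set` (y :: s)] = h @^-1` [set y] `|` h @^-1` [set` s].
  apply/seteqP; split=> x /=; rewrite in_cons.
    by case/orP => [/eqP ->|xs]; [left|right].
  by case=> [->|->]; rewrite ?eqxx ?orbT.
by case: alg => _ [_ hU]; rewrite E; apply: hU.
Qed.

Lemma comp_act {T : choiceType} (h : S -> T) (k : T -> V) :
  finite_set (range h) -> (forall y, Sig (h @^-1` [set y])) ->
  finite_set (range (fun s => k (h s))) /\
  forall y, Sig ((fun s => k (h s)) @^-1` [set y]).
Proof.
move=> hf hm; split.
  by rewrite -image_comp; apply: finite_image.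
move=> x.
have -> : (fun s => k (h s)) @^-1` [set x] =
   h @^-1` [set` seq.filter (fun y => k y == x) (fset_set (range h))].
  apply/seteqP; split=> z /=.
    by move=> <-; rewrite mem_filter eqxx /= in_fset_set //; apply/mem_set; exists z.
  by rewrite mem_filter => /andP[/eqP].
exact: Sig_seq.
Qed.

Lemma cst_is_act x : X x -> is_act Sig X (@cst_act V S x).
Proof. by move=> Xx; split=> //; split; [apply: cst_fin|apply: (cst_meas alg)]. Qed.

Lemma mix_is_act (a : R) f g : convex_in X -> 0 <= a <= 1 ->
  is_act Sig X f -> is_act Sig X g -> is_act Sig X (mix a f g).
Proof.
move=> hX ha [fX [ff fm]] [gX [gf gm]].
have pf := pair_fin f g ff gf; have pm := pair_meas alg f g fm gm.
case: (comp_act (pairf f g) (fun y : V * V => a *: y.1 + (1 - a) *: y.2) pf pm) => h1 h2.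
split; last by split.
by move=> s; apply: hX.
Qed.

End ActsGen.

Section Sup.
Context {R : realType} {V : lmodType R} {S : Type} {Sig : set (set S)} (X : set V).
Hypothesis alg : is_algebra Sig.
Variable D : set (set S -> R).
Hypothesis hD : D `<=` Delta Sig.
Hypothesis hDn : D !=set0.
Hypothesis hX : convex_in X.

Lemma act_min (u : V -> R) f : is_act Sig X f ->
  exists x, X x /\ forall s, u x <= u (f s).
Proof.
case: hDn => p0 /hD hp0 hf.
case: (act_max X alg hp0 (fun x => - u x) f hf) => x [Xx hx]; exists x; split => // s.
by rewrite -lerN2; apply: hx.
Qed.

Lemma integ_ge (u : V -> R) f c p : D p -> is_act Sig X f ->
  (forall s, c <= u (f s)) -> c <= integ u f p.
Proof.
move=> /hD hp hf hc; rewrite -lerN2 -(integN X alg hp) //.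
apply: (integ_le X alg hp) => // s; rewrite lerN2; exact: hc.
Qed.

Lemma hub (u : V -> R) f : is_act Sig X f -> has_ubound [set integ u f p | p in D].
Proof.
case: hDn => p0 /hD hp0 hf.
case: (act_max X alg hp0 u f hf) => x [Xx hx]; exists (u x) => _ [p Dp <-].
exact: (integ_le X alg (hD _ Dp) u f (u x) hf hx).
Qed.

Lemma B_ub (u : V -> R) f p : is_act Sig X f -> D p -> integ u f p <= maxD D u f.
Proof. by move=> hf Dp; apply: ub_le_sup; [exact: hub|exists p]. Qed.

Lemma B_le (u : V -> R) f b : (forall p, D p -> integ u f p <= b) -> maxD D u f <= b.
Proof.
move=> hb; apply: ge_sup; first by case: hDn => p Dp; exists (integ u f p); exists p.
by move=> _ [p Dp <-]; apply: hb.
Qed.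

Lemma minC_maxD (u : V -> R) f : is_act Sig X f ->
  Defs.minC D u f = - maxD D (fun x => - u x) f.
Proof.
move=> hf; rewrite /Defs.minC /maxD /inf image_comp; congr (- sup _).
apply/seteqP; split=> _ [p Dp <-]; exists p => //=; by rewrite (integN X alg (hD _ Dp)).
Qed.

Lemma Mcst (u : V -> R) x : X x -> maxD D u (cst_act x) = u x.
Proof.
move=> Xx; apply/eqP; rewrite eq_le; apply/andP; split.
  by apply: B_le => p Dp; rewrite (J1 alg (hD _ Dp)).
case: hDn => p Dp; rewrite -{1}(J1 alg (hD _ Dp) u x).
by apply: B_ub => //; apply: (cst_is_act alg).
Qed.

Lemma Mmix (u : V -> R) f z (a : R) : affine_on X u -> is_act Sig X f -> X z ->
  0 < a <= 1 ->
  maxD D u (mix a f (cst_act z)) = a * maxD D u f + (1 - a) * u z.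
Proof.
move=> haff hf Xz /andP[a0 a1].
have ha : 0 <= a <= 1 by rewrite (ltW a0) a1.
have hz := cst_is_act alg z Xz.
have E p : D p -> integ u (mix a f (cst_act z)) p = a * integ u f p + (1 - a) * u z.
  by move=> Dp; rewrite (J2 X alg (hD _ Dp)) // (J1 alg (hD _ Dp)).
have hm := mix_is_act alg a f _ hX ha hf hz.
apply/eqP; rewrite eq_le; apply/andP; split.
  apply: B_le => p Dp; rewrite E //; rewrite lerD2r; apply: ler_wpM2l; first exact: ltW.
  exact: B_ub.
set M := maxD D u (mix a f (cst_act z)).
have key : maxD D u f <= a^-1 * (M - (1 - a) * u z).
  apply: B_le => p Dp.
  have h1 : a * integ u f p <= M - (1 - a) * u z.
    by rewrite lerBrDr -E //; apply: B_ub.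
  rewrite -[integ u f p](mulKf (lt0r_neq0 a0)); apply: ler_wpM2l => //.
  by rewrite invr_ge0 ltW.
have : a * maxD D u f <= a * (a^-1 * (M - (1 - a) * u z)) by apply: ler_wpM2l => //; exact: ltW.
rewrite mulVKf ?lt0r_neq0 // => h2; by rewrite -lerBrDr.
Qed.

Lemma Mmono (u : V -> R) f g d : is_act Sig X f -> is_act Sig X g ->
  (forall s, u (g s) + d <= u (f s)) -> maxD D u g + d <= maxD D u f.
Proof.
move=> hf hg hd; rewrite -lerBrDr; apply: B_le => p Dp.
rewrite lerBrDr; apply: le_trans (Jdiff X alg (hD _ Dp) u f g hf hg d hd) _.
exact: B_ub.
Qed.

Lemma Mbnd (u : V -> R) f : is_act Sig X f ->
  exists x1 x2, X x1 /\ X x2 /\ u x1 <= maxD D u f /\ maxD D u f <= u x2.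
Proof.
move=> hf; case: (act_min u f hf) => x1 [X1 h1]; case: hDn => p0 Dp0.
case: (act_max X alg (hD _ Dp0) u f hf) => x2 [X2 h2].
exists x1, x2; split => //; split => //; split.
  apply: le_trans (B_ub u f p0 hf Dp0); exact: integ_ge.
by apply: B_le => p Dp; apply: (integ_le X alg (hD _ Dp)).
Qed.

Lemma Mlip (u : V -> R) f g : affine_on X u -> is_act Sig X f -> is_act Sig X g ->
  exists K : R, 0 <= K /\ forall a b : R, 0 <= a <= 1 -> 0 <= b <= 1 ->
    maxD D u (mix a f g) <= maxD D u (mix b f g) + K * `|a - b|.
Proof.
move=> haff hf hg.
case: (act_min u f hf) => lf [_ hlf]; case: (act_min u g hg) => lg [_ hlg].
case: hDn => p0 Dp0.
case: (act_max X alg (hD _ Dp0) u f hf) => xf [_ hhf].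
case: (act_max X alg (hD _ Dp0) u g hg) => xg [_ hhg].
exists (`|u xf - u lg| + `|u xg - u lf|); split; first by rewrite addr_ge0.
move=> a b ha hb; apply: B_le => p Dp.
have hp := hD _ Dp.
suff main : integ u (mix a f g) p <= integ u (mix b f g) p + (`|u xf - u lg| + `|u xg - u lf|) * `|a - b|.
  apply: (le_trans main); rewrite lerD2r; apply: B_ub => //; exact: mix_is_act.
rewrite !(J2 X alg hp) //.
set F := integ u f p; set G := integ u g p.
have F1 : u lf <= F by apply: integ_ge.
have F2 : F <= u xf by apply: (integ_le X alg hp).
have G1 : u lg <= G by apply: integ_ge.
have G2 : G <= u xg by apply: (integ_le X alg hp).
have e1 : a * F + (1 - a) * G - (b * F + (1 - b) * G) = (a - b) * (F - G) by ring.
rewrite -lerBlDl e1; apply: le_trans (ler_norm _) _; rewrite normrM mulrC.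
apply: ler_wpM2r => //.
have t1 : F - G <= `|u xf - u lg| + `|u xg - u lf|.
  apply: le_trans (_ : u xf - u lg <= _); first lra.
  apply: le_trans (ler_norm _) _; rewrite lerDl; exact: normr_ge0.
have t2 : G - F <= `|u xf - u lg| + `|u xg - u lf|.
  apply: le_trans (_ : u xg - u lf <= _); first lra.
  apply: le_trans (ler_norm _) _; rewrite lerDr; exact: normr_ge0.
by rewrite ler_norml; apply/andP; split; lra.
Qed.

End Sup.

Lemma small2 {R : realType} (x y : R) : 0 < x -> 0 < y -> exists e, 0 < e /\ e <= x /\ e <= y.
Proof. move=> hx hy; case: (leP x y) => h; [exists x|exists y]; split => //; split => //; exact: ltW. Qed.

Lemma mix1 {R : realType} {V : lmodType R} {S : Type} (f g : S -> V) : mix 1 f g = f.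
Proof. by apply: funext => s; rewrite /mix subrr scale0r addr0 scale1r. Qed.

Lemma mix0 {R : realType} {V : lmodType R} {S : Type} (f g : S -> V) : mix 0 f g = g.
Proof. by apply: funext => s; rewrite /mix subr0 scale0r add0r scale1r. Qed.

Lemma real_between {R : realType} {V : lmodType R} (X : set V) (u : V -> R) x1 x2 c :
  convex_in X -> affine_on X u -> X x1 -> X x2 -> u x1 <= c -> c <= u x2 ->
  exists x, X x /\ u x = c.
Proof.
move=> hX haff X1 X2 h1 h2.
have [e|e] := eqVneq (u x1) (u x2).
  exists x1; split => //; apply/eqP; rewrite eq_le h1 /= e h2 //.
have d0 : 0 < u x2 - u x1.
  rewrite subr_gt0 lt_neqAle e /=; lra.
set t := (c - u x1) / (u x2 - u x1).
have t0 : 0 <= t by apply: divr_ge0; lra.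
have t1 : t <= 1 by rewrite ler_pdivrMr // mul1r; lra.
have ht : 0 <= t <= 1 by rewrite t0 t1.
exists (t *: x2 + (1 - t) *: x1); split; first exact: hX.
rewrite haff //; rewrite /t; field; by rewrite lt0r_neq0.
Qed.

Lemma conn01 {R : realType} (A B : R -> Prop) :
  open_in_unit A -> open_in_unit B -> A 1 -> B 0 ->
  (forall t, 0 <= t <= 1 -> A t -> B t -> False) ->
  exists t, 0 <= t <= 1 /\ ~ A t /\ ~ B t.
Proof.
move=> oA oB A1 B0 AB; apply: contrapT => hn.
have hAB t : 0 <= t <= 1 -> A t \/ B t.
  move=> ht; case: (pselect (A t)) => ha; [by left|].
  case: (pselect (B t)) => hb; [by right|].
  by exfalso; apply: hn; exists t.
pose T := [set t : R | (0 <= t <= 1) /\ B t].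
have T0 : T 0 by split => //; rewrite lexx ler01.
have hs : has_sup T by split; [exists 0|exists 1 => t [/andP[_ ?] _]].
have s1 : sup T <= 1 by apply: ge_sup; [exists 0|move=> t [/andP[_ ?] _]].
have s0 : 0 <= sup T by apply: (ub_le_sup hs.2); exact: T0.
have hs01 : 0 <= sup T <= 1 by rewrite s0 s1.
case: (hAB _ hs01) => hA.
  case: (oA _ hs01 hA) => e [e0 he].
  case: (sup_adherent e0 hs) => t Tt lt.
  case: Tt => /andP[t0 t1] Bt.
  have tle : t <= sup T by apply: (ub_le_sup hs.2); split => //; rewrite t0 t1.
  apply: (AB t); rewrite ?t0 ?t1 //; apply: he; first by rewrite t0 t1.
  rewrite distrC ger0_norm ?subr_ge0 //; lra.
case: (oB _ hs01 hA) => e [e0 he].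
have [s_1|s_lt1] := eqVneq (sup T) 1.
  by apply: (AB 1); rewrite ?lexx ?ler01 // -s_1.
have slt : 0 < 1 - sup T by rewrite subr_gt0 lt_neqAle s_lt1.
have e20 : 0 < e / 2 by rewrite divr_gt0.
case: (small2 _ _ e20 slt) => e' [e'0 [e'1 e'2]].
have ht : 0 <= sup T + e' <= 1 by apply/andP; split; lra.
have Bt : B (sup T + e').
  apply: he => //; rewrite addrAC subrr add0r ger0_norm; [lra|exact: ltW].
have : sup T + e' <= sup T by apply: (ub_le_sup hs.2).
lra.
Qed.

Lemma arith_final {R : realType} (e k mf Mf mh Mh ch uy : R) :
  Mf - mf != 0 -> Mh - mh != 0 -> e != 0 -> k = (Mh - mh) / (Mf - mf) ->
  e * k * uy = e * ch + e * k * mf - e * mh ->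
  uy = ((Mh - ch) / (Mh - mh)) * mf + (1 - (Mh - ch) / (Mh - mh)) * Mf.
Proof.
move=> hf hh he hk E.
have hk0 : k != 0 by rewrite hk mulf_neq0 // invr_eq0.
apply: (mulfI (mulf_neq0 he hk0)); rewrite E hk; field.
by rewrite hf hh.
Qed.

Lemma eps_choice {R : realType} (k J r : R) : 0 < k -> 0 < r ->
  exists e, 0 < e /\ e <= 2^-1 /\ e * k <= 2^-1 /\ - r <= e * J / (1 - e) <= r.
Proof.
move=> k0 r0.
have h2 : 0 < (2^-1 : R) by rewrite invr_gt0 ltr0n.
have hk2 : 0 < (2 * k)^-1 by rewrite invr_gt0 mulr_gt0.
have hJ : 0 < r / (2 * `|J| + 1).
  by rewrite divr_gt0 // ltr_pwDr // mulr_ge0 // normr_ge0.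
case: (small2 _ _ h2 hk2) => e1 [e10 [e11 e12]].
case: (small2 _ _ e10 hJ) => e [e0 [e1' e2]].
have e_le : e <= 2^-1 by lra.
exists e; split => //; split => //.
split.
  have ek : e <= (2 * k)^-1 by lra.
  have : e * k <= (2 * k)^-1 * k by apply: ler_wpM2r; [exact: ltW|exact: ek].
  suff -> : (2 * k)^-1 * k = 2^-1 by [].
  by field; rewrite lt0r_neq0.
have h1e : 0 < 1 - e by lra.
have eJ : e * (2 * `|J| + 1) <= r.
  by rewrite -ler_pdivlMr // ltr_pwDr // mulr_ge0 // normr_ge0.
have nJ := normr_ge0 J.
have key : e * `|J| <= r * (1 - e) by nra.
rewrite -ler_norml normrM normrM normfV (gtr0_norm e0) (gtr0_norm h1e).
by rewrite ler_pdivrMr.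
Qed.

Definition Ind {A : Type} (P : A -> A -> Prop) f g := ~ P f g /\ ~ P g f.

Section Abs.
Context {R : realType} {V : lmodType R} {S : Type} {Sig : set (set S)} {X : set V}.
Hypothesis alg : is_algebra Sig.
Hypothesis hX : convex_in X.
Variable u : V -> R.
Hypothesis haff : affine_on X u.
Variables xlo xhi : V.
Hypotheses (Xlo : X xlo) (Xhi : X xhi) (ulh : u xlo < u xhi).
Variables m M : (S -> V) -> R.
Local Notation F := (is_act Sig X).
Hypothesis hmM : forall f, F f -> m f <= M f.
Hypothesis hmc : forall x, X x -> m (cst_act x) = u x.
Hypothesis hMc : forall x, X x -> M (cst_act x) = u x.
Hypothesis hmmix : forall f z a, F f -> X z -> 0 < a <= 1 ->
  m (mix a f (cst_act z)) = a * m f + (1 - a) * u z.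
Hypothesis hMmix : forall f z a, F f -> X z -> 0 < a <= 1 ->
  M (mix a f (cst_act z)) = a * M f + (1 - a) * u z.
Hypothesis hmbnd : forall f, F f -> exists x, X x /\ u x <= m f.
Hypothesis hMbnd : forall f, F f -> exists x, X x /\ M f <= u x.
Variable pref : (S -> V) -> (S -> V) -> Prop.
Hypothesis hpref : forall f g, F f -> F g -> (pref f g <-> m g < m f /\ M g < M f).

Lemma cstF x : X x -> F (cst_act x).
Proof. exact: cst_is_act alg x. Qed.

Lemma mixF a f g : 0 <= a <= 1 -> F f -> F g -> F (mix a f g).
Proof. by move=> ha hf hg; apply: mix_is_act. Qed.

Definition z0 := (2^-1 : R) *: xhi + (1 - 2^-1) *: xlo.
Lemma Xz0 : X z0.
Proof. apply: hX => //; apply/andP; split; [by rewrite invr_ge0 ler0n|by rewrite invf_le1 // ler1n]. Qed.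
Lemma uz0 : u z0 = 2^-1 * u xhi + (1 - 2^-1) * u xlo.
Proof. apply: haff => //; apply/andP; split; [by rewrite invr_ge0 ler0n|by rewrite invf_le1 // ler1n]. Qed.

Lemma half01 : 0 <= (2^-1 : R) <= 1.
Proof. by apply/andP; split; [by rewrite invr_ge0 ler0n|by rewrite invf_le1 // ler1n]. Qed.

Lemma half_bnd : 0 < (2^-1 : R) <= 1.
Proof. by apply/andP; split; [by rewrite invr_gt0 ltr0n|by rewrite invf_le1 // ler1n]. Qed.

Definition half (f : S -> V) := mix (2^-1) f (cst_act z0).

Lemma halfF f : F f -> F (half f).
Proof.
move=> hf; apply: mixF => //; last by apply: cstF; exact: Xz0.
by case/andP: half_bnd => h1 h2; rewrite h2 ltW.
Qed.

Lemma below f : F f -> exists z, X z /\ u z < m (half f).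
Proof.
move=> hf; case: (hmbnd _ hf) => x1 [X1 h1].
rewrite /half (hmmix _ _ _ hf Xz0 half_bnd).
rewrite uz0.
case: (ltP (u x1) (u z0)) => hlt; rewrite uz0 in hlt.
  exists x1; split => //; lra.
exists xlo; split => //; have := ulh; lra.
Qed.

Lemma above f : F f -> exists z, X z /\ M (half f) < u z.
Proof.
move=> hf; case: (hMbnd _ hf) => x2 [X2 h2].
rewrite /half (hMmix _ _ _ hf Xz0 half_bnd).
rewrite uz0.
case: (ltP (u z0) (u x2)) => hlt; rewrite uz0 in hlt.
  exists x2; split => //; lra.
exists xhi; split => //; have := ulh; lra.
Qed.


Section Part1.
Variable P : (S -> V) -> (S -> V) -> Prop.
Hypothesis Pasym : asymmetric_on F P.
Hypothesis Pneg : neg_transitive_on F P.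
Hypothesis Pcont : forall f g h, F f -> F g -> F h ->
  open_in_unit (fun a => P (mix a f g) h) /\ open_in_unit (fun a => P h (mix a f g)).
Hypothesis PCI : forall f g x (a : R), F f -> F g -> X x -> 0 < a < 1 ->
  (P f g <-> P (mix a f (cst_act x)) (mix a g (cst_act x))).
Hypothesis Pext : extends_on F pref P.

Lemma L_ext f g : F f -> F g -> m g < m f -> M g < M f -> P f g.
Proof. by move=> hf hg h1 h2; apply: Pext => //; apply/hpref. Qed.

Lemma L_or x y z : F x -> F y -> F z -> P x z -> P x y \/ P y z.
Proof.
move=> hx hy hz hxz; case: (pselect (P x y)) => h1; [by left|].
case: (pselect (P y z)) => h2; [by right|].
by exfalso; apply: (Pneg _ _ _ hx hy hz h1 h2).
Qed.

Lemma L_trans f g h : F f -> F g -> F h -> P f g -> P g h -> P f h.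
Proof.
move=> hf hg hh h1 h2; case: (L_or _ _ _ hf hh hg h1) => // h3.
by exfalso; apply: (Pasym _ _ hg hh h2).
Qed.


Lemma K_int1 f f' g z : F f -> F f' -> F g -> m f = m f' -> M f = M f' ->
  X z -> u z < m f -> P f g -> P f' g.
Proof.
move=> hf hf' hg em eM Xz hz hP.
have hzc := cstF _ Xz.
case: (Pcont _ _ _ hf hzc hg) => [op1 _].
have h1 : P (mix 1 f (cst_act z)) g by rewrite mix1.
case: (op1 1 _ h1); first by rewrite lexx ler01.
move=> e [e0 he].
have e20 : 0 < e / 2 by rewrite divr_gt0.
have h20 : 0 < (2^-1 : R) by rewrite invr_gt0 ltr0n.
case: (small2 _ _ e20 h20) => e' [e'0 [e'1 e'2]].
have hb : 0 < 1 - e' <= 1 by apply/andP; split; lra.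
have hb' : 0 <= 1 - e' <= 1 by apply/andP; split; lra.
have hPb : P (mix (1 - e') f (cst_act z)) g.
  apply: he => //; rewrite (_ : 1 - e' - 1 = - e'); last by ring.
  rewrite normrN ger0_norm; [lra|exact: ltW].
have hfb := mixF _ _ _ hb' hf hzc.
apply: (L_trans _ _ _ hf' hfb hg) => //.
apply: L_ext => //.
  rewrite (hmmix _ _ _ hf Xz hb) -em.
  have : 0 < e' * (m f - u z) by rewrite mulr_gt0 // subr_gt0.
  lra.
rewrite (hMmix _ _ _ hf Xz hb) -eM.
have := hmM _ hf.
have : 0 < e' * (m f - u z) by rewrite mulr_gt0 // subr_gt0.
nra.
Qed.

Lemma K_int2 f f' g z : F f -> F f' -> F g -> m f = m f' -> M f = M f' ->
  X z -> M f < u z -> P g f -> P g f'.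
Proof.
move=> hf hf' hg em eM Xz hz hP.
have hzc := cstF _ Xz.
case: (Pcont _ _ _ hf hzc hg) => [_ op2].
have h1 : P g (mix 1 f (cst_act z)) by rewrite mix1.
case: (op2 1 _ h1); first by rewrite lexx ler01.
move=> e [e0 he].
have e20 : 0 < e / 2 by rewrite divr_gt0.
have h20 : 0 < (2^-1 : R) by rewrite invr_gt0 ltr0n.
case: (small2 _ _ e20 h20) => e' [e'0 [e'1 e'2]].
have hb : 0 < 1 - e' <= 1 by apply/andP; split; lra.
have hb' : 0 <= 1 - e' <= 1 by apply/andP; split; lra.
have hPb : P g (mix (1 - e') f (cst_act z)).
  apply: he => //; rewrite (_ : 1 - e' - 1 = - e'); last by ring.
  rewrite normrN ger0_norm; [lra|exact: ltW].
have hfb := mixF _ _ _ hb' hf hzc.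
apply: (L_trans _ _ _ hg hfb hf') => //.
apply: L_ext => //.
  rewrite (hmmix _ _ _ hf Xz hb) -em.
  have := hmM _ hf.
  have : 0 < e' * (u z - M f) by rewrite mulr_gt0 // subr_gt0.
  nra.
rewrite (hMmix _ _ _ hf Xz hb) -eM.
have : 0 < e' * (u z - M f) by rewrite mulr_gt0 // subr_gt0.
lra.
Qed.

Lemma half_in : 0 < (2^-1 : R) < 1.
Proof. by apply/andP; split; [rewrite invr_gt0 ltr0n|rewrite invf_lt1 // ltr1n]. Qed.

Lemma m_half f : F f -> m (half f) = 2^-1 * m f + (1 - 2^-1) * u z0.
Proof. by move=> hf; rewrite /half (hmmix _ _ _ hf Xz0 half_bnd). Qed.

Lemma M_half f : F f -> M (half f) = 2^-1 * M f + (1 - 2^-1) * u z0.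
Proof. by move=> hf; rewrite /half (hMmix _ _ _ hf Xz0 half_bnd). Qed.

Lemma K f f' g : F f -> F f' -> F g -> m f = m f' -> M f = M f' ->
  (P f g -> P f' g) /\ (P g f -> P g f').
Proof.
move=> hf hf' hg em eM.
have e1 : m (half f) = m (half f') by rewrite !m_half // em.
have e2 : M (half f) = M (half f') by rewrite !M_half // eM.
split => hP.
  apply/(PCI _ _ _ _ hf' hg Xz0 half_in).
  case: (below _ hf) => z [Xz hz].
  apply: (K_int1 _ _ _ z (halfF _ hf) (halfF _ hf') (halfF _ hg)) => //.
  exact/(PCI _ _ _ _ hf hg Xz0 half_in).
apply/(PCI _ _ _ _ hg hf' Xz0 half_in).
case: (above _ hf) => z [Xz hz].
apply: (K_int2 _ _ _ z (halfF _ hf) (halfF _ hf') (halfF _ hg)) => //.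
exact/(PCI _ _ _ _ hg hf Xz0 half_in).
Qed.

Lemma Pcst x y : X x -> X y -> (P (cst_act x) (cst_act y) <-> u y < u x).
Proof.
move=> Xx Xy; have hx := cstF _ Xx; have hy := cstF _ Xy; split; last first.
  by move=> h; apply: L_ext => //; rewrite ?hmc ?hMc.
move=> hP; case: (ltgtP (u y) (u x)) => // h.
  have : P (cst_act y) (cst_act x) by apply: L_ext => //; rewrite ?hmc ?hMc.
  by move/(Pasym _ _ hx hy hP).
have := (K _ _ _ hx hy hy); rewrite !hmc // !hMc // => /(_ (esym h) (esym h)) [/(_ hP) H _].
exfalso; exact: (Pasym _ _ hy hy H H).
Qed.

Lemma Ind_trans a b c : F a -> F b -> F c -> Ind P a b -> Ind P b c -> Ind P a c.
Proof.
move=> ha hb hc [h1 h2] [h3 h4]; split => H.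
  by case: (L_or _ _ _ ha hb hc H).
by case: (L_or _ _ _ hc hb ha H).
Qed.

Lemma Ind_sym a b : Ind P a b -> Ind P b a.
Proof. by case. Qed.

Lemma Ind_l a b h : F a -> F b -> F h -> Ind P a b -> (P a h <-> P b h).
Proof.
move=> ha hb hh [h1 h2]; split => H.
  by case: (L_or _ _ _ ha hb hh H).
by case: (L_or _ _ _ hb ha hh H).
Qed.

Lemma Ind_r a b h : F a -> F b -> F h -> Ind P a b -> (P h a <-> P h b).
Proof.
move=> ha hb hh [h1 h2]; split => H.
  by case: (L_or _ _ _ hh hb ha H).
by case: (L_or _ _ _ hh ha hb H).
Qed.

Lemma CEbnd f y : F f -> X y -> Ind P f (cst_act y) -> m f <= u y <= M f.
Proof.
move=> hf Xy [h1 h2]; have hy := cstF _ Xy.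
apply/andP; split; rewrite leNgt; apply/negP => H.
  apply: h1; apply: L_ext => //; rewrite ?hmc ?hMc //.
  by apply: (lt_le_trans H); apply: hmM.
apply: h2; apply: L_ext => //; rewrite ?hmc ?hMc //.
by apply: (le_lt_trans _ H); apply: hmM.
Qed.

Lemma Ival f y y' : F f -> X y -> X y' -> Ind P f (cst_act y) -> Ind P f (cst_act y') ->
  u y = u y'.
Proof.
move=> hf Xy Xy' h1 h2; have hy := cstF _ Xy; have hy' := cstF _ Xy'.
have [H1 H2] := Ind_trans _ _ _ hy hf hy' (Ind_sym _ _ h1) h2.
case: (ltgtP (u y) (u y')) => // h.
  by exfalso; apply: H2; apply/Pcst.
by exfalso; apply: H1; apply/Pcst.
Qed.

Lemma Ipair f f' y : F f -> F f' -> X y -> m f = m f' -> M f = M f' ->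
  Ind P f (cst_act y) -> Ind P f' (cst_act y).
Proof.
move=> hf hf' Xy em eM [h1 h2]; have hy := cstF _ Xy.
have := K _ _ _ hf' hf hy (esym em) (esym eM) => -[k1 k2].
by split => H; [apply: h1; apply: k1|apply: h2; apply: k2].
Qed.

Lemma Imix f y z (a : R) : F f -> X y -> X z -> 0 < a < 1 ->
  Ind P f (cst_act y) -> Ind P (mix a f (cst_act z)) (cst_act (a *: y + (1 - a) *: z)).
Proof.
move=> hf Xy Xz ha [h1 h2]; have hy := cstF _ Xy.
split => H.
  by apply: h1; apply/(PCI _ _ _ _ hf hy Xz ha).
by apply: h2; apply/(PCI _ _ _ _ hy hf Xz ha).
Qed.

Lemma CE f : F f -> exists y, X y /\ Ind P f (cst_act y).
Proof.
move=> hf; have hf2 := halfF _ hf; set f2 := half f in hf2 *.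
case: (below _ hf) => zl [Xzl hzl]; case: (above _ hf) => zh [Xzh hzh].
have hml := hmM _ hf2.
have czl := cstF _ Xzl; have czh := cstF _ Xzh.
case: (Pcont _ _ _ czh czl hf2) => oA oB.
have A1 : P (mix 1 (cst_act zh) (cst_act zl)) f2.
  rewrite mix1; apply: L_ext => //; rewrite ?hmc ?hMc //; lra.
have B0 : P f2 (mix 0 (cst_act zh) (cst_act zl)).
  rewrite mix0; apply: L_ext => //; rewrite ?hmc ?hMc //; lra.
have AB t : 0 <= t <= 1 -> P (mix t (cst_act zh) (cst_act zl)) f2 ->
    P f2 (mix t (cst_act zh) (cst_act zl)) -> False.
  move=> ht H1 H2; have hm := mixF _ _ _ ht czh czl.
  exact: (Pasym _ _ hm hf2 H1 H2).
case: (conn01 _ _ oA oB A1 B0 AB) => t [ht [nA nB]].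
have Xyt : X (t *: zh + (1 - t) *: zl) by apply: hX.
set yt := t *: zh + (1 - t) *: zl in Xyt.
have Iyt : Ind P f2 (cst_act yt) by split.
have cyt := cstF _ Xyt.
have /andP[b1 b2] := CEbnd _ _ hf2 Xyt Iyt.
rewrite /f2 m_half // in b1; rewrite /f2 M_half // in b2.
case: (hmbnd _ hf) => x1 [X1 h1]; case: (hMbnd _ hf) => x2 [X2 h2].
have hm := hmM _ hf.
have [y [Xy uy]] : exists y, X y /\ u y = 2 * u yt - u z0.
  apply: (real_between _ _ _ _ _ hX haff X1 X2).
    have : u x1 <= m f by [].
    lra.
  lra.
exists y; split => //.
have Xy2 : X (2^-1 *: y + (1 - 2^-1) *: z0).
  by apply: hX; [exact: Xy|exact: Xz0|exact: half01].
have cy2 := cstF _ Xy2.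
have uy2 : u (2^-1 *: y + (1 - 2^-1) *: z0) = u yt.
  rewrite haff //; [|exact: Xz0|exact: half01].
  by rewrite uy; field.
have I2 : Ind P (cst_act yt) (cst_act (2^-1 *: y + (1 - 2^-1) *: z0)).
  split => H.
    by have := (iffLR (Pcst _ _ Xyt Xy2) H); rewrite uy2 ltxx.
  by have := (iffLR (Pcst _ _ Xy2 Xyt) H); rewrite uy2 ltxx.
have I3 := Ind_trans _ _ _ hf2 cyt cy2 Iyt I2.
have cy := cstF _ Xy.
case: I3 => H1 H2; split => H.
  by apply: H1; apply/(PCI _ _ _ _ hf cy Xz0 half_in).
by apply: H2; apply/(PCI _ _ _ _ cy hf Xz0 half_in).
Qed.

Lemma repr_from (al : R) :
  (forall f y, F f -> X y -> Ind P f (cst_act y) -> u y = al * m f + (1 - al) * M f) ->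
  forall f g, F f -> F g -> (P f g <-> al * m g + (1 - al) * M g < al * m f + (1 - al) * M f).
Proof.
move=> hv f g hf hg.
case: (CE _ hf) => yf [Xyf If]; case: (CE _ hg) => yg [Xyg Ig].
have cf := cstF _ Xyf; have cg := cstF _ Xyg.
rewrite -(hv _ _ hf Xyf If) -(hv _ _ hg Xyg Ig) -(Pcst _ _ Xyf Xyg).
rewrite (Ind_l _ _ _ hf cf hg If).
exact: (Ind_r _ _ _ hg cg cf Ig).
Qed.

Lemma part1_main : exists al : R, 0 <= al <= 1 /\
  forall f g, F f -> F g -> (P f g <-> al * m g + (1 - al) * M g < al * m f + (1 - al) * M f).
Proof.
case: (pselect (exists h, F h /\ m h < M h)) => [[h [hh hlt]]|hno]; last first.
  exists 1; split; first by rewrite lexx ler01.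
  apply: repr_from => f y hf Xy Iy.
  have /andP[b1 b2] := CEbnd _ _ hf Xy Iy.
  have hm := hmM _ hf.
  have : ~ (m f < M f) by move=> H; apply: hno; exists f.
  move/negP; rewrite -leNgt => H2.
  rewrite subrr mul0r addr0 mul1r; lra.
case: (CE _ hh) => yh [Xyh Ih].
have /andP[c1 c2] := CEbnd _ _ hh Xyh Ih.
set al := (M h - u yh) / (M h - m h).
have dh0 : 0 < M h - m h by rewrite subr_gt0.
exists al; split.
  apply/andP; split; first by rewrite /al; apply: divr_ge0; lra.
  by rewrite /al ler_pdivrMr // mul1r; lra.
apply: repr_from => f y hf Xy Iy.
have /andP[b1 b2] := CEbnd _ _ hf Xy Iy.
have hm := hmM _ hf.
case: (eqVneq (M f) (m f)) => [eMm|nMm].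
  rewrite eMm; have : u y = m f by lra.
  move=> ->; ring.
have df0 : 0 < M f - m f by rewrite subr_gt0 lt_neqAle eq_sym nMm hm.
set k := (M h - m h) / (M f - m f).
have k0 : 0 < k by rewrite divr_gt0.
set J := k * (m f - u z0) - (m h - u z0).
have r0 : 0 < (u xhi - u xlo) / 2 by rewrite divr_gt0 // subr_gt0.
case: (eps_choice _ J _ k0 r0) => e [e0 [e1 [ek /andP[eJ1 eJ2]]]].
have h1e : 1 - e != 0 by apply: lt0r_neq0; have := half_in; lra.
set c := u z0 + e * J / (1 - e).
have Ec : (1 - e) * c = (1 - e) * u z0 + e * J by rewrite /c; field.
have hc : u xlo <= c <= u xhi.
  have := uz0; have := ulh; rewrite /c; move: eJ1 eJ2 => *; apply/andP; split; lra.
case/andP: hc => hc1 hc2.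
have [z [Xz uzc]] := real_between _ _ _ _ _ hX haff Xlo Xhi hc1 hc2.
have b0 : 0 < e * k by rewrite mulr_gt0.
have hb : 0 < e * k < 1 by rewrite b0 /=; have := half_in; lra.
have hb' : 0 < e * k <= 1 by rewrite b0 /=; have := half_in; lra.
have he : 0 < e < 1 by rewrite e0 /=; have := half_in; lra.
have he' : 0 < e <= 1 by rewrite e0 /=; have := half_in; lra.
have hb'' : 0 <= e * k <= 1 by rewrite (ltW b0) /=; have := half_in; lra.
have he'' : 0 <= e <= 1 by rewrite (ltW e0) /=; have := half_in; lra.
have Xz0' := Xz0.
have cz0 := cstF _ Xz0'; have cz := cstF _ Xz.
have hf' := mixF _ _ _ hb'' hf cz0.
have hh' := mixF _ _ _ he'' hh cz.
have kd : k * (M f - m f) = M h - m h by rewrite /k; field; rewrite lt0r_neq0.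
have ekd : e * k * M f = e * k * m f + e * (M h - m h) by rewrite -kd; ring.
have em : m (mix (e * k) f (cst_act z0)) = m (mix e h (cst_act z)).
  rewrite (hmmix _ _ _ hf Xz0' hb') (hmmix _ _ _ hh Xz he') uzc.
  move: Ec; rewrite /J; lra.
have eM : M (mix (e * k) f (cst_act z0)) = M (mix e h (cst_act z)).
  rewrite (hMmix _ _ _ hf Xz0' hb') (hMmix _ _ _ hh Xz he') uzc.
  move: Ec ekd; rewrite /J; lra.
have If' := Imix _ _ _ _ hf Xy Xz0' hb Iy.
have Ih' := Imix _ _ _ _ hh Xyh Xz he Ih.
have Ih'' := Ipair _ _ _ hh' hf' (hX _ _ Xyh Xz _ he'') (esym em) (esym eM) Ih'.
have Xa : X (e * k *: y + (1 - e * k) *: z0) by apply: hX.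
have Xb : X (e *: yh + (1 - e) *: z) by apply: hX.
have Ev := Ival _ _ _ hf' Xa Xb If' Ih''.
rewrite (haff _ _ Xy Xz0' _ hb'') (haff _ _ Xyh Xz _ he'') uzc in Ev.
apply: (arith_final e k); rewrite ?lt0r_neq0 //.
move: Ev Ec; rewrite /J; lra.
Qed.

End Part1.
Definition Vl (al : R) f := al * m f + (1 - al) * M f.

Definition rep (P : (S -> V) -> (S -> V) -> Prop) (al : R) :=
  forall f g, F f -> F g -> (P f g <-> Vl al g < Vl al f).

Lemma Vl_cst al x : X x -> Vl al (cst_act x) = u x.
Proof. by move=> Xx; rewrite /Vl hmc // hMc //; ring. Qed.

Lemma Vl_mix al f z a : F f -> X z -> 0 < a <= 1 ->
  Vl al (mix a f (cst_act z)) = a * Vl al f + (1 - a) * u z.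
Proof. by move=> hf Xz ha; rewrite /Vl (hmmix _ _ _ hf Xz ha) (hMmix _ _ _ hf Xz ha); ring. Qed.

Lemma Vl_bnd al f : F f -> 0 <= al <= 1 -> m f <= Vl al f <= M f.
Proof.
move=> hf /andP[a0 a1]; have := hmM _ hf; rewrite /Vl => h.
by apply/andP; split; nra.
Qed.

Lemma uniq_lt P a b : 0 <= a <= 1 -> 0 <= b <= 1 -> rep P a -> rep P b ->
  (exists h, F h /\ m h < M h) -> a < b -> False.
Proof.
move=> ha hb ra rb [h [hh hlt]] ab.
have /andP[va1 va2] := Vl_bnd _ _ hh ha; have /andP[vb1 vb2] := Vl_bnd _ _ hh hb.
have gap : Vl b h < Vl a h.
  rewrite /Vl; have : 0 < (b - a) * (M h - m h) by rewrite mulr_gt0 // subr_gt0.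
  lra.
case: (hmbnd _ hh) => x1 [X1 h1]; case: (hMbnd _ hh) => x2 [X2 h2].
have [y [Xy uy]] : exists y, X y /\ u y = (Vl a h + Vl b h) / 2.
  by apply: (real_between _ _ _ _ _ hX haff X1 X2); lra.
have cy := cstF _ Xy.
have H1 : P h (cst_act y) by apply/(ra _ _ hh cy); rewrite Vl_cst // uy; lra.
have := (iffLR (rb _ _ hh cy) H1); rewrite Vl_cst // uy; lra.
Qed.

Lemma uniq_alpha P : ~ complete_on F pref -> forall a b : R, 0 <= a <= 1 -> 0 <= b <= 1 ->
  rep P a -> rep P b -> a = b.
Proof.
move=> nc a b ha hb ra rb.
have ex : exists h, F h /\ m h < M h.
  apply: contrapT => hno; apply: nc.
  have eq f : F f -> m f = M f.
    move=> hf; have := hmM _ hf; case: (ltgtP (m f) (M f)) => // H _.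
    by exfalso; apply: hno; exists f.
  move=> f g h hf hg hh [n1 n2] [n3 n4].
  have e1 : m f = m g.
    case: (ltgtP (m f) (m g)) => // H.
      by exfalso; apply: n2; apply/hpref => //; rewrite -!eq.
    by exfalso; apply: n1; apply/hpref => //; rewrite -!eq.
  have e2 : m g = m h.
    case: (ltgtP (m g) (m h)) => // H.
      by exfalso; apply: n4; apply/hpref => //; rewrite -!eq.
    by exfalso; apply: n3; apply/hpref => //; rewrite -!eq.
  split.
    by move=> /(hpref _ _ hf hh) [H _]; move: H; rewrite e1 e2 ltxx.
  by move=> /(hpref _ _ hh hf) [H _]; move: H; rewrite e1 e2 ltxx.
case: (ltgtP a b) => // H.
  by exfalso; apply: (uniq_lt _ _ _ ha hb ra rb ex H).
by exfalso; apply: (uniq_lt _ _ _ hb ha rb ra ex H).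
Qed.

Section Part2.
Hypothesis hmmono : forall f g d, F f -> F g -> (forall s, u (g s) + d <= u (f s)) -> m g + d <= m f.
Hypothesis hMmono : forall f g d, F f -> F g -> (forall s, u (g s) + d <= u (f s)) -> M g + d <= M f.
Hypothesis hmlip : forall f g, F f -> F g -> exists K : R, 0 <= K /\ forall a b : R,
  0 <= a <= 1 -> 0 <= b <= 1 -> m (mix a f g) <= m (mix b f g) + K * `|a - b|.
Hypothesis hMlip : forall f g, F f -> F g -> exists K : R, 0 <= K /\ forall a b : R,
  0 <= a <= 1 -> 0 <= b <= 1 -> M (mix a f g) <= M (mix b f g) + K * `|a - b|.
Hypothesis hgap : forall f g, F f -> F g -> (forall s, u (g s) < u (f s)) ->
  exists d : R, 0 < d /\ forall s, u (g s) + d <= u (f s).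

Lemma Vlip al f g : 0 <= al <= 1 -> F f -> F g -> exists K : R, 0 <= K /\ forall a b : R,
  0 <= a <= 1 -> 0 <= b <= 1 -> Vl al (mix a f g) <= Vl al (mix b f g) + K * `|a - b|.
Proof.
move=> /andP[a0 a1] hf hg.
case: (hmlip _ _ hf hg) => K1 [K10 h1]; case: (hMlip _ _ hf hg) => K2 [K20 h2].
exists (al * K1 + (1 - al) * K2); split; first by nra.
move=> a b ha hb; have := h1 _ _ ha hb; have := h2 _ _ ha hb.
rewrite /Vl; have := normr_ge0 (a - b); nra.
Qed.

Lemma open_lemma (phi : R -> R) (K c : R) (a : R) : 0 <= K ->
  (forall b, 0 <= b <= 1 -> phi a <= phi b + K * `|a - b|) -> c < phi a ->
  exists e : R, 0 < e /\ forall b, 0 <= b <= 1 -> `|b - a| < e -> c < phi b.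
Proof.
move=> K0 hl hc.
have K1 : 0 < K + 1 by lra.
exists ((phi a - c) / (K + 1)); split; first by rewrite divr_gt0 // subr_gt0.
move=> b hb hba; have := hl _ hb; rewrite distrC in hba.
have : K * `|a - b| <= K * ((phi a - c) / (K + 1)) by apply: ler_wpM2l => //; exact: ltW.
have E : phi a - c - K * ((phi a - c) / (K + 1)) = (phi a - c) / (K + 1).
  by field; rewrite lt0r_neq0.
have : 0 < (phi a - c) / (K + 1) by rewrite divr_gt0 // subr_gt0.
lra.
Qed.

Variable al : R.
Hypothesis hal : 0 <= al <= 1.
Variable P : (S -> V) -> (S -> V) -> Prop.
Hypothesis hrep : rep P al.

Lemma part2 : invariant_biseparable Sig X P /\ extends_on F pref P.
Proof.
have hal' := hal.
case/andP: hal' => a0 a1.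
split; last first.
  move=> f g hf hg /(hpref _ _ hf hg) [h1 h2]; apply/hrep => //; rewrite /Vl.
  case: (eqVneq al 0) => [->|an0]; first by lra.
  have : 0 < al by rewrite lt0r an0 a0.
  nra.
split.
  by move=> f g hf hg /(hrep _ _ hf hg) H /(hrep _ _ hg hf); lra.
split.
  move=> f g h hf hg hh [n1 n2] [n3 n4]; move: n1 n2 n3 n4.
  rewrite (hrep _ _ hf hg) (hrep _ _ hg hf) (hrep _ _ hg hh) (hrep _ _ hh hg).
  rewrite (hrep _ _ hf hh) (hrep _ _ hh hf) => n1 n2 n3 n4.
  split => H; [apply: n1|apply: n2]; lra.
split.
  move=> f g h hf hg hh; rewrite (hrep _ _ hf hg) (hrep _ _ hg hh) (hrep _ _ hf hh).
  move=> n1 n2 H; lra.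
split.
  move=> f g h hf hg hh; case: (Vlip _ _ _ hal hf hg) => K [K0 hK]; split.
    move=> a ha /(hrep _ _ (mixF _ _ _ ha hf hg) hh) H.
    case: (open_lemma (fun t => Vl al (mix t f g)) _ (Vl al h) a K0 (fun b hb => hK a b ha hb) H).
    move=> e [e0 he]; exists e; split => // b hb hba.
    by apply/(hrep _ _ (mixF _ _ _ hb hf hg) hh); apply: he.
  move=> a ha /(hrep _ _ hh (mixF _ _ _ ha hf hg)) H.
  have H' : - Vl al h < - Vl al (mix a f g) by lra.
  have hK' : forall b, 0 <= b <= 1 -> - Vl al (mix a f g) <= - Vl al (mix b f g) + K * `|a - b|.
    by move=> b hb; have := hK b a hb ha; rewrite distrC; lra.
  case: (open_lemma (fun t => - Vl al (mix t f g)) _ (- Vl al h) a K0 hK' H').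
  move=> e [e0 he]; exists e; split => // b hb hba.
  apply/(hrep _ _ hh (mixF _ _ _ hb hf hg)); have := he b hb hba; lra.
split.
  move=> f g x a hf hg Xx /andP[ha0 ha1].
  have ha : 0 < a <= 1 by rewrite ha0 ltW.
  have ha' : 0 <= a <= 1 by rewrite ltW // ltW.
  have cx := cstF _ Xx.
  rewrite (hrep _ _ hf hg) (hrep _ _ (mixF _ _ _ ha' hf cx) (mixF _ _ _ ha' hg cx)).
  rewrite !(Vl_mix al _ _ _ _ Xx ha) //.
  split => H; nra.
move=> f g hf hg hs.
have hlt : forall s, u (g s) < u (f s).
  move=> s; have Xf := hf.1 s; have Xg := hg.1 s.
  have := (iffLR (hrep _ _ (cstF _ Xf) (cstF _ Xg)) (hs s)).
  by rewrite !Vl_cst.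
case: (hgap _ _ hf hg hlt) => d [d0 hd].
have h1 := hmmono _ _ _ hf hg hd; have h2 := hMmono _ _ _ hf hg hd.
apply/(hrep _ _ hf hg); rewrite /Vl; nra.
Qed.

End Part2.

End Abs.

Lemma gap_lemma {R : realType} {V : lmodType R} {S : Type} {Sig : set (set S)} {X : set V}
  (u : V -> R) (f g : S -> V) (s0 : S) :
  is_act Sig X f -> is_act Sig X g -> (forall s, u (g s) < u (f s)) ->
  exists d : R, 0 < d /\ forall s, u (g s) + d <= u (f s).
Proof.
move=> [fX [ff fm]] [gX [gf gm]] hlt.
have pf := pair_fin f g ff gf.
case: (seq_argmax (fun y : V * V => - (u y.1 - u y.2)) (pairf f g s0) (fset_set (range (pairf f g)))) => y [yin hy].
have yr : range (pairf f g) y.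
  move: yin; rewrite inE => /orP[/eqP ->|]; first by exists s0.
  by rewrite in_fset_set // => /set_mem.
case: yr => s1 _ E.
exists (u (f s1) - u (g s1)); split; first by rewrite subr_gt0.
move=> s.
have : - (u (pairf f g s).1 - u (pairf f g s).2) <= - (u y.1 - u y.2).
  apply: hy; rewrite inE in_fset_set //; apply/orP; right; apply/mem_set; by exists s.
rewrite -E /pairf /=; lra.
Qed.

Theorem theorem3 (R : realType) (V : lmodType R) (S : Type)
  (Sig : set (set S)) (X : set V)
  (pref : (S -> V) -> (S -> V) -> Prop)
  (u : V -> R) (C D : set (set S -> R))
  (pstar : (S -> V) -> (S -> V) -> Prop) :
  is_algebra Sig ->
  convex_in X ->
  (exists x y, X x /\ X y /\ x <> y) ->
  unique_HP_rep Sig X pref u C D ->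
  ((invariant_biseparable Sig X pstar /\ extends_on (is_act Sig X) pref pstar)
     <-> exists a : R, 0 <= a <= 1 /\ alpha_rep Sig X pstar u C D a) /\
  (~ complete_on (is_act Sig X) pref ->
     forall a b : R, 0 <= a <= 1 -> 0 <= b <= 1 ->
       alpha_rep Sig X pstar u C D a -> alpha_rep Sig X pstar u C D b -> a = b).
Proof.
move=> alg hX _ [[haff [hnc [hC [hD [_ [_ [_ [_ [hCD hpref]]]]]]]]] _].
case: hCD => p0 [Cp0 Dp0].
have hCn : C !=set0 by exists p0.
have hDn : D !=set0 by exists p0.
have [s0 _] := S_ne alg (hC _ Cp0).
have [xlo [xhi [Xlo [Xhi ulh]]]] : exists xlo xhi, X xlo /\ X xhi /\ u xlo < u xhi.
  case: hnc => x [y [Xx [Xy nxy]]].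
  case: (ltgtP (u x) (u y)) => h; [by exists x, y|by exists y, x|by []].
have affN : affine_on X (fun x => - u x).
  by move=> x y Xx Xy t ht; rewrite haff //; ring.
pose m := Defs.minC C u; pose M := maxD D u.
have mE f : is_act Sig X f -> m f = - maxD C (fun x => - u x) f.
  by move=> hf; rewrite /m (minC_maxD X alg C hC u f hf).
have hmM : forall f, is_act Sig X f -> m f <= M f.
  move=> f hf; rewrite mE //.
  have h1 := B_ub X alg C hC hCn (fun x => - u x) f p0 hf Cp0.
  rewrite (integN X alg (hC _ Cp0)) // in h1.
  have h2 := B_ub X alg D hD hDn u f p0 hf Dp0.
  rewrite /M; lra.
have hmc : forall x, X x -> m (cst_act x) = u x.
  move=> x Xx; rewrite mE; last exact: cst_is_act.
  by rewrite (Mcst X alg C hC hCn (fun x => - u x) x Xx) opprK.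
have hMc : forall x, X x -> M (cst_act x) = u x.
  by move=> x Xx; rewrite /M (Mcst X alg D hD hDn u x Xx).
have hmmix : forall f z a, is_act Sig X f -> X z -> 0 < a <= 1 ->
    m (mix a f (cst_act z)) = a * m f + (1 - a) * u z.
  move=> f z a hf Xz ha.
  have ha' : 0 <= a <= 1 by case/andP: ha => a0 a1; rewrite ltW.
  rewrite mE; last by apply: mix_is_act => //; exact: cst_is_act.
  rewrite (Mmix X alg C hC hCn hX (fun x => - u x) f z a affN hf Xz ha) mE //; ring.
have hMmix : forall f z a, is_act Sig X f -> X z -> 0 < a <= 1 ->
    M (mix a f (cst_act z)) = a * M f + (1 - a) * u z.
  by move=> f z a hf Xz ha; rewrite /M (Mmix X alg D hD hDn hX u f z a haff hf Xz ha).
have hmbnd : forall f, is_act Sig X f -> exists x, X x /\ u x <= m f.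
  move=> f hf; case: (Mbnd X alg C hC hCn (fun x => - u x) f hf) => x1 [x2 [_ [X2 [_ h2]]]].
  by exists x2; split => //; rewrite mE //; lra.
have hMbnd : forall f, is_act Sig X f -> exists x, X x /\ M f <= u x.
  move=> f hf; case: (Mbnd X alg D hD hDn u f hf) => x1 [x2 [_ [X2 [_ h2]]]].
  by exists x2.
have hmmono : forall f g d, is_act Sig X f -> is_act Sig X g ->
    (forall s, u (g s) + d <= u (f s)) -> m g + d <= m f.
  move=> f g d hf hg hd; rewrite !mE //.
  have hd' : forall s, - u (f s) + d <= - u (g s) by move=> s; have := hd s; lra.
  have := Mmono X alg C hC hCn (fun x => - u x) g f d hg hf hd'; lra.
have hMmono : forall f g d, is_act Sig X f -> is_act Sig X g ->
    (forall s, u (g s) + d <= u (f s)) -> M g + d <= M f.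
  by move=> f g d hf hg hd; apply: (Mmono X alg D hD hDn u f g d hf hg hd).
have hmlip : forall f g, is_act Sig X f -> is_act Sig X g -> exists K : R, 0 <= K /\
    forall a b : R, 0 <= a <= 1 -> 0 <= b <= 1 -> m (mix a f g) <= m (mix b f g) + K * `|a - b|.
  move=> f g hf hg; case: (Mlip X alg C hC hCn hX (fun x => - u x) f g affN hf hg) => K [K0 hK].
  exists K; split => // a b ha hb.
  rewrite !mE; [|exact: mix_is_act|exact: mix_is_act].
  by have := hK b a hb ha; rewrite distrC; lra.
have hMlip : forall f g, is_act Sig X f -> is_act Sig X g -> exists K : R, 0 <= K /\
    forall a b : R, 0 <= a <= 1 -> 0 <= b <= 1 -> M (mix a f g) <= M (mix b f g) + K * `|a - b|.
  by move=> f g hf hg; apply: (Mlip X alg D hD hDn hX u f g haff hf hg).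
have hgap : forall f g, is_act Sig X f -> is_act Sig X g -> (forall s, u (g s) < u (f s)) ->
    exists d : R, 0 < d /\ forall s, u (g s) + d <= u (f s).
  by move=> f g hf hg; apply: (gap_lemma u f g s0 hf hg).
have hpref' : forall f g, is_act Sig X f -> is_act Sig X g ->
    (pref f g <-> m g < m f /\ M g < M f) by [].
split; last first.
  move=> nc a b ha hb ra rb.
  exact: (uniq_alpha alg hX u haff m M hmM hmc hMc hmbnd hMbnd pref hpref' pstar nc a b ha hb ra rb).
split.
  case=> [[asym [_ [neg [cont [CI _]]]]] ext].
  exact: (part1_main alg hX u haff xlo xhi Xlo Xhi ulh m M hmM hmc hMc hmmix hMmix hmbnd hMbnd
     pref hpref' pstar asym neg cont CI ext).
case=> al [hal hrep].
exact: (part2 alg hX u m M hmc hMc hmmix hMmix pref hpref' hmmono hMmono hmlip hMlip hgap al hal pstar hrep).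
Qed.
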